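(* For any nonempty basic clopen sets $\mathcal U,\mathcal V\subseteq\mathcal G$ there is a permutation $\varphi$ of $\mathbb N$ with $\varphi(1)=1$ such that $h_\varphi(\mathcal U)\cap\mathcal V\neq\emptyset$.
   Context: Let $\mathbb N=\{1,2,3,\dots\}$. Equip $\mathbb N^{\mathbb N\times\mathbb N}$ with the product topology of the discrete topology on $\mathbb N$. Let $\mathcal G$ be the subspace consisting of those $A\in\mathbb N^{\mathbb N\times\mathbb N}$ that are the multiplication table of a group on the underlying set $\mathbb N$ whose identity element is $1$. Basic clopen sets are the sets of the form $\{G\in\mathcal G:\ G(n_i,m_i)=k_i\text{ for all }i\le l\}$ with $l,n_i,m_i,k_i\in\mathbb N$ (i.e. finitely many products $n_i\cdot m_i=k_i$ are prescribed). For a bijection $\varphi:\mathbb N\to\mathbb N$ fixing $1$, the induced homeomorphism $h_\varphi:\mathcal G\to\mathcal G$ is defined by $h_\varphi(G)(i,j)=\varphi(G(\varphi^{-1}(i),\varphi^{-1}(j)))$, so that $\varphi$ is an isomorphism from the group with table $G$ onto the group with table $h_\varphi(G)$. *)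

(* Defs.v *)
(* N = {1,2,3,...} is represented by the positive elements of nat;
   a point of N^(N x N) is a function nat -> nat -> nat, of which only the values
   at positive arguments matter. *)
From Stdlib Require Import Arith List.
Import ListNotations.

Definition is_group_table (G : nat -> nat -> nat) : Prop :=
  (forall n m, 0 < n -> 0 < m -> 0 < G n m) /\
  (forall a b c, 0 < a -> 0 < b -> 0 < c -> G (G a b) c = G a (G b c)) /\
  (forall n, 0 < n -> G 1 n = n /\ G n 1 = n) /\
  (forall n, 0 < n -> exists m, 0 < m /\ G n m = 1 /\ G m n = 1).

(* A basic clopen set is given by finitely many prescriptions (n_i, m_i, k_i),
   all in N, meaning n_i * m_i = k_i. *)
Definition valid_prescription (c : list (nat * nat * nat)) : Prop :=
  Forall (fun t => match t with (n, m, k) => 0 < n /\ 0 < m /\ 0 < k end) c.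

Definition in_basic_clopen (c : list (nat * nat * nat)) (G : nat -> nat -> nat) : Prop :=
  is_group_table G /\
  Forall (fun t => match t with (n, m, k) => G n m = k end) c.

Definition perm_N_fix1 (phi psi : nat -> nat) : Prop :=
  (forall n, 0 < n -> 0 < phi n) /\ (forall n, 0 < n -> 0 < psi n) /\
  (forall n, 0 < n -> phi (psi n) = n) /\ (forall n, 0 < n -> psi (phi n) = n) /\
  phi 1 = 1.

Definition h_phi (phi psi : nat -> nat) (G : nat -> nat -> nat) : nat -> nat -> nat :=
  fun i j => phi (G (psi i) (psi j)).

(* Main.v *)
Require Import Defs.
From Stdlib Require Import Arith List Lia Cantor.
Import ListNotations.

Definition bij (p q : nat -> nat) : Prop :=
  (forall n, 0 < n -> 0 < p n) /\ (forall n, 0 < n -> 0 < q n) /\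
  (forall n, 0 < n -> p (q n) = n) /\ (forall n, 0 < n -> q (p n) = n).

Definition tr (c d x : nat) : nat :=
  if Nat.eqb x c then d else if Nat.eqb x d then c else x.

Lemma tr_invol c d x : tr c d (tr c d x) = x.
Proof.
  unfold tr.
  destruct (Nat.eqb_spec x c).
  - subst. destruct (Nat.eqb_spec d c); [subst; auto|].
    destruct (Nat.eqb_spec d d); [auto|lia].
  - destruct (Nat.eqb_spec x d).
    + subst. rewrite Nat.eqb_refl. auto.
    + destruct (Nat.eqb_spec x c); [lia|]. destruct (Nat.eqb_spec x d); [lia|]. auto.
Qed.

Lemma tr_pos c d x : 0 < c -> 0 < d -> 0 < x -> 0 < tr c d x.
Proof. unfold tr; destruct (Nat.eqb x c), (Nat.eqb x d); auto. Qed.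

Lemma tr_other c d x : x <> c -> x <> d -> tr c d x = x.
Proof. unfold tr; destruct (Nat.eqb_spec x c), (Nat.eqb_spec x d); auto; lia. Qed.

Lemma tr_c c d : tr c d c = d.
Proof. unfold tr; rewrite Nat.eqb_refl; auto. Qed.

Lemma extend (f : nat -> nat) (l : list nat) :
  (forall x, In x l -> 0 < x) -> (forall x, In x l -> 0 < f x) ->
  (forall x y, In x l -> In y l -> f x = f y -> x = y) ->
  exists p q, bij p q /\ forall x, In x l -> p x = f x.
Proof.
  induction l as [|a l IH]; intros Hp Hf Hi.
  - exists (fun x => x), (fun x => x). split; [unfold bij; auto|]. intros x [].
  - destruct IH as [p [q [[B1 [B2 [B3 B4]]] E]]].
    + intros; apply Hp; simpl; auto.
    + intros; apply Hf; simpl; auto.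
    + intros; apply Hi; simpl; auto.
    + destruct (in_dec Nat.eq_dec a l) as [Ha|Ha].
      * exists p, q. split; [repeat split; auto|].
        intros x [<-|Hx]; auto.
      * assert (Pa : 0 < a) by (apply Hp; simpl; auto).
        assert (Pfa : 0 < f a) by (apply Hf; simpl; auto).
        set (c := p a). set (d := f a).
        assert (Pc : 0 < c) by (apply B1; auto).
        exists (fun x => tr c d (p x)), (fun x => q (tr c d x)).
        split.
        { repeat split; intros.
          - apply tr_pos; auto.
          - apply B2, tr_pos; auto.
          - rewrite B3 by (apply tr_pos; auto). apply tr_invol.
          - rewrite tr_invol. auto. }
        intros x [<-|Hx].
        -- apply tr_c.
        -- rewrite (E x Hx). apply tr_other.
           ++ intro Heq. assert (p x = p a) by (rewrite E; auto).
              assert (x = a).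
              { rewrite <- (B4 x) by (apply Hp; simpl; auto).
                rewrite <- (B4 a) by auto. congruence. }
              subst; contradiction.
           ++ intro Heq. assert (x = a) by (apply Hi; simpl; auto). subst; contradiction.
Qed.

Lemma bij_comp p q p' q' : bij p q -> bij p' q' -> bij (fun x => p (p' x)) (fun x => q' (q x)).
Proof.
  intros [A1 [A2 [A3 A4]]] [C1 [C2 [C3 C4]]]; repeat split; intros; auto.
  - rewrite C3; auto.
  - rewrite A4; auto.
Qed.

Lemma transport H p q : is_group_table H -> bij p q -> p 1 = 1 ->
  is_group_table (h_phi p q H).
Proof.
  intros [G1 [G2 [G3 G4]]] [A1 [A2 [A3 A4]]] P1.
  assert (Q1 : q 1 = 1) by (rewrite <- P1 at 1; apply A4; lia).
  unfold h_phi; repeat split; intros.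
  - apply A1, G1; auto.
  - rewrite !A4 by (apply G1; auto). rewrite G2; auto.
  - rewrite Q1, (proj1 (G3 _ (A2 n H0))); auto.
  - rewrite Q1, (proj2 (G3 _ (A2 n H0))); auto.
  - destruct (G4 (q n) (A2 n H0)) as [m [Hm [E1 E2]]].
    exists (p m). split; [auto|]. rewrite A4 by auto. rewrite E1, E2; auto.
Qed.

Definition e (a b : nat) : nat := S (to_nat (a - 1, b - 1)).
Definition d1 (n : nat) : nat := S (fst (of_nat (n - 1))).
Definition d2 (n : nat) : nat := S (snd (of_nat (n - 1))).

Lemma d_e1 a b : 0 < a -> 0 < b -> d1 (e a b) = a.
Proof. intros. unfold d1, e. replace (S (to_nat (a - 1, b - 1)) - 1) with (to_nat (a - 1, b - 1)) by lia. rewrite cancel_of_to. simpl. lia. Qed.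
Lemma d_e2 a b : 0 < a -> 0 < b -> d2 (e a b) = b.
Proof. intros. unfold d2, e. replace (S (to_nat (a - 1, b - 1)) - 1) with (to_nat (a - 1, b - 1)) by lia. rewrite cancel_of_to. simpl. lia. Qed.
Lemma e_d n : 0 < n -> e (d1 n) (d2 n) = n.
Proof.
  intros. unfold d1, d2, e. rewrite !Nat.sub_succ, !Nat.sub_0_r.
  rewrite <- surjective_pairing, cancel_to_of. lia.
Qed.
Lemma e11 : e 1 1 = 1.
Proof. reflexivity. Qed.
Lemma d11 : d1 1 = 1. Proof. reflexivity. Qed.
Lemma d21 : d2 1 = 1. Proof. reflexivity. Qed.

Definition prodG (G1 G2 : nat -> nat -> nat) a b :=
  e (G1 (d1 a) (d1 b)) (G2 (d2 a) (d2 b)).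

Lemma prod_group G1 G2 : is_group_table G1 -> is_group_table G2 ->
  is_group_table (prodG G1 G2).
Proof.
  intros [P1 [A1 [I1 V1]]] [P2 [A2 [I2 V2]]].
  assert (D1 : forall n, 0 < d1 n) by (intros; unfold d1; lia).
  assert (D2 : forall n, 0 < d2 n) by (intros; unfold d2; lia).
  unfold prodG; repeat split; intros.
  - unfold e; lia.
  - rewrite d_e1, d_e2, d_e1, d_e2 by auto. rewrite A1, A2; auto.
  - rewrite d11, d21, (proj1 (I1 _ (D1 n))), (proj1 (I2 _ (D2 n))). apply e_d; auto.
  - rewrite d11, d21, (proj2 (I1 _ (D1 n))), (proj2 (I2 _ (D2 n))). apply e_d; auto.
  - destruct (V1 _ (D1 n)) as [m1 [Hm1 [E1 F1]]].
    destruct (V2 _ (D2 n)) as [m2 [Hm2 [E2 F2]]].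
    exists (e m1 m2). split; [unfold e; lia|].
    rewrite d_e1, d_e2 by auto. rewrite E1, E2, F1, F2. auto.
Qed.

Definition labels (c : list (nat * nat * nat)) : list nat :=
  1 :: flat_map (fun t => match t with (n, m, k) => [n; m; k] end) c.

Lemma labels_pos c : valid_prescription c -> forall x, In x (labels c) -> 0 < x.
Proof.
  intros Hv x [<-|Hx]; [lia|].
  apply in_flat_map in Hx. destruct Hx as [[[n m] k] [Ht Hx]].
  unfold valid_prescription in Hv; rewrite Forall_forall in Hv. specialize (Hv _ Ht). simpl in Hv.
  simpl in Hx. intuition (subst; auto).
Qed.

Lemma labels_in c n m k : In (n, m, k) c ->
  In n (labels c) /\ In m (labels c) /\ In k (labels c).
Proof.
  intros Ht. unfold labels. repeat split; right; apply in_flat_map;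
  exists (n, m, k); simpl; auto.
Qed.

Theorem lemma5p2 (cU cV : list (nat * nat * nat)) :
  valid_prescription cU -> valid_prescription cV ->
  (exists G, in_basic_clopen cU G) ->
  (exists G, in_basic_clopen cV G) ->
  exists phi psi : nat -> nat,
    perm_N_fix1 phi psi /\
    exists G, in_basic_clopen cU G /\ in_basic_clopen cV (h_phi phi psi G).
Proof.
  intros HU HV [G1 [T1 F1]] [G2 [T2 F2]].
  set (H := prodG G1 G2).
  assert (TH : is_group_table H) by (apply prod_group; auto).
  destruct (extend (fun n => e n 1) (labels cU)) as [r [r' [Br Er]]].
  { apply labels_pos; auto. }
  { intros; unfold e; lia. }
  { intros x y Hx Hy Hxy. apply labels_pos in Hx, Hy; auto.
    rewrite <- (d_e1 x 1), <- (d_e1 y 1) by lia. congruence. }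
  destruct (extend (fun n => e 1 n) (labels cV)) as [t [t' [Bt Et]]].
  { apply labels_pos; auto. }
  { intros; unfold e; lia. }
  { intros x y Hx Hy Hxy. apply labels_pos in Hx, Hy; auto.
    rewrite <- (d_e2 1 x), <- (d_e2 1 y) by lia. congruence. }
  assert (r1 : r 1 = 1) by (rewrite Er; simpl; auto).
  assert (t1 : t 1 = 1) by (rewrite Et; simpl; auto).
  assert (Br' : bij r' r) by (destruct Br as [? [? [? ?]]]; repeat split; auto).
  assert (Bt' : bij t' t) by (destruct Bt as [? [? [? ?]]]; repeat split; auto).
  assert (r'1 : r' 1 = 1) by (rewrite <- r1 at 1; apply Br; lia).
  assert (t'1 : t' 1 = 1) by (rewrite <- t1 at 1; apply Bt; lia).
  set (G := h_phi r' r H).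
  assert (TG : is_group_table G) by (apply transport; auto).
  exists (fun x => t' (r x)), (fun x => r' (t x)).
  assert (Bphi : bij (fun x => t' (r x)) (fun x => r' (t x))) by (apply bij_comp; auto).
  split.
  { destruct Bphi as [? [? [? ?]]]. repeat split; auto. rewrite r1; auto. }
  exists G. split; split; auto.
  - rewrite Forall_forall in F1 |- *. intros [[n m] k] Ht.
    specialize (F1 _ Ht). simpl in F1 |- *.
    destruct (labels_in _ _ _ _ Ht) as [In' [Im Ik]].
    pose proof (labels_pos _ HU) as LP.
    unfold G, h_phi, H, prodG.
    rewrite (Er n In'), (Er m Im), !d_e1, !d_e2 by (auto; lia).
    rewrite F1, (proj1 (proj1 (proj2 (proj2 T2)) 1 ltac:(lia))).
    rewrite <- (Er k Ik). apply Br. auto.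
  - apply transport; auto. simpl. rewrite r1; auto.
  - rewrite Forall_forall in F2 |- *. intros [[n m] k] Ht.
    specialize (F2 _ Ht). simpl in F2 |- *.
    destruct (labels_in _ _ _ _ Ht) as [In' [Im Ik]].
    pose proof (labels_pos _ HV) as LP.
    destruct Br as [R1 [R2 [R3 R4]]].
    unfold G, h_phi, H, prodG.
    repeat (rewrite R3 by (first [apply Bt; auto | unfold e; lia])). match goal with |- ?g => idtac g end.
    idtac.
    rewrite (Et n In'), (Et m Im), !d_e1, !d_e2 by (auto; lia).
    rewrite F2, (proj1 (proj1 (proj2 (proj2 T1)) 1 ltac:(lia))).
    rewrite <- (Et k Ik). apply Bt. auto.
Qed.
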